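(* Let $G$ be a $k$-degenerate graph with maximum degree $\Delta(G)$ and let $H$ be an $l$-degenerate graph. Then $AT(G+_Q H)\le \max\{2\Delta(G)-2,\,k+l\}+1$.
   Context: A graph is $k$-degenerate if its vertices can be successively deleted so that each deleted vertex has degree at most $k$ at the time of deletion. For an orientation $D$, a subdigraph is Eulerian if every vertex has equal in- and outdegree in it; $D$ is an AT-orientation if the numbers of Eulerian subgraphs with an even and with an odd number of arcs differ; $AT(G)$ is the smallest $k$ such that $G$ has an AT-orientation of maximum outdegree at most $k-1$. $Q(G)$ has vertex set $V(G)\cup E(G)$: it is $S(G)$ (each edge $e=xy$ replaced by the path $x\,e\,y$) plus edges $ee'$ whenever edges $e,e'$ are adjacent in $G$. $G+_Q H$ has vertex set $(V(G)\cup E(G))\times V(H)$, with $(u_1,u_2)\sim(v_1,v_2)$ iff [$u_1=v_1\in V(G)$ and $u_2v_2\in E(H)$] or [$u_2=v_2$ and $u_1v_1\in E(Q(G))$]. *)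

(* Defs.v *)
(* Finite simple graphs are symmetric irreflexive relations on a finType. *)
From mathcomp Require Import all_boot all_order.
Set Implicit Arguments. Unset Strict Implicit. Unset Printing Implicit Defensive.

Section Graphs.
Variable T : finType.

(* k-degenerate: vertices can be deleted one by one (in increasing order of the
   injective rank r), each having at most k neighbours still present when deleted. *)
Definition degenerate (g : rel T) (k : nat) : Prop :=
  exists r : T -> nat, injective r /\
    forall x, #|[set y | g x y & r x < r y]| <= k.

Definition maxdeg (g : rel T) : nat := \max_(x : T) #|[set y | g x y]|.

Definition outdeg (A : {set T * T}) (x : T) : nat := #|[set y | (x, y) \in A]|.
Definition indeg (A : {set T * T}) (x : T) : nat := #|[set y | (y, x) \in A]|.

Definition is_orientation (g : rel T) (D : {set T * T}) : bool :=
  [forall x, forall y, ((x, y) \in D) ==> g x y] &&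
  [forall x, forall y, g x y ==> (((x, y) \in D) (+) ((y, x) \in D))].

Definition eulerian (D A : {set T * T}) : bool :=
  (A \subset D) && [forall x, outdeg A x == indeg A x].

Definition num_even_eulerian (D : {set T * T}) : nat :=
  #|[set A : {set T * T} | eulerian D A & ~~ odd #|A|]|.
Definition num_odd_eulerian (D : {set T * T}) : nat :=
  #|[set A : {set T * T} | eulerian D A & odd #|A|]|.

Definition AT_orientation (D : {set T * T}) : bool :=
  num_even_eulerian D != num_odd_eulerian D.

Definition has_AT_orientation_below (g : rel T) (k : nat) : bool :=
  [exists D : {set T * T},
     [&& is_orientation g D, AT_orientation D & [forall x, outdeg D x < k]]].

(* AT(g): the smallest such k.  Acyclic orientations are AT-orientations with
   outdegree < #|T|, so the minimum lies in [0, #|T|] and this search finds it. *)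
Definition AT (g : rel T) : nat :=
  find (has_AT_orientation_below g) (iota 0 #|T|.+1).

End Graphs.

Section QProduct.
Variables V W : finType.

Definition edges (g : rel V) : {set {set V}} :=
  [set E : {set V} | [exists x, exists y, g x y && (E == [set x; y])]].

Definition edge_of (g : rel V) := {E : {set V} | E \in edges g}.

(* Q(G): vertex set V(G) ⊔ E(G); S(G) plus adjacency of adjacent edges *)
Definition Qadj (g : rel V) : rel (V + edge_of g) :=
  fun u v => match u, v with
  | inl x, inr e => x \in val e
  | inr e, inl x => x \in val e
  | inr e, inr e' => (e != e') && (val e :&: val e' != set0)
  | inl _, inl _ => false
  end.

Definition is_vertex (g : rel V) (u : V + edge_of g) : bool :=
  if u is inl _ then true else false.

Definition Qprod (g : rel V) (h : rel W) : rel ((V + edge_of g) * W) :=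
  fun u v => [&& u.1 == v.1, is_vertex u.1 & h u.2 v.2]
          || ((u.2 == v.2) && Qadj u.1 v.1).

End QProduct.

(* Main.v *)
Require Import Defs.
From mathcomp Require Import all_boot all_order zify.
Set Implicit Arguments. Unset Strict Implicit. Unset Printing Implicit Defensive.

Section Gen.
Variable T : finType.

Lemma eulerian_acyclic (r : T -> nat) (g : rel T) (A : {set T * T}) :
  eulerian [set p : T * T | g p.1 p.2 && (r p.1 < r p.2)] A -> A = set0.
Proof.
case/andP=> /subsetP sub /forallP eq.
apply/eqP; apply/set0Pn => -[p pA].
have P0 : 0 < outdeg A p.1.
  by apply/card_gt0P; exists p.2; rewrite inE -surjective_pairing.
case: (@arg_minnP _ p.1 (fun x => 0 < outdeg A x) r P0) => x0 Px0 minx0.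
move: (eq x0) => /eqP e0; rewrite e0 in Px0.
case/card_gt0P: Px0 => z; rewrite inE => zA.
have := sub _ zA; rewrite inE /= => /andP[_ lt].
have Pz : 0 < outdeg A z by apply/card_gt0P; exists x0; rewrite inE.
by have := minx0 _ Pz; rewrite leqNgt lt.
Qed.

Lemma AT_of_degenerate (g : rel T) (d : nat) :
  symmetric g -> irreflexive g -> degenerate g d -> AT g <= d.+1.
Proof.
move=> gs gi [r [rinj rdeg]].
set D := [set p : T * T | g p.1 p.2 && (r p.1 < r p.2)].
have H : has_AT_orientation_below g d.+1.
  apply/existsP; exists D; apply/and3P; split.
  - apply/andP; split; apply/forallP=> x; apply/forallP=> y; apply/implyP.
      by rewrite inE => /andP[].
    move=> gxy; rewrite !inE /= gxy gs gxy /=.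
    have nxy : x != y by apply: contraTneq gxy => ->; rewrite gi.
    have : r x != r y by apply: contra nxy => /eqP/rinj ->.
    by case: ltngtP.
  - have E1 : [set A | eulerian D A & ~~ odd #|A|] = [set set0].
      apply/setP=> A; rewrite !inE; apply/andP/eqP.
        by case=> /eulerian_acyclic.
      move=> ->; rewrite cards0 /=; split=> //.
      by apply/andP; split; [exact: sub0set | apply/forallP=> x; rewrite /outdeg /indeg; apply/eqP; rewrite !(eq_card (B := pred0)) // => y; rewrite !inE].
    have E2 : [set A | eulerian D A & odd #|A|] = set0.
      apply/setP=> A; rewrite !inE; apply/negbTE; apply/negP=> /andP[/eulerian_acyclic -> ].
      by rewrite cards0.
    by rewrite /AT_orientation /num_even_eulerian /num_odd_eulerian E1 E2 cards1 cards0.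
  - apply/forallP=> x; rewrite ltnS; apply: leq_trans (rdeg x).
    by apply: subset_leq_card; apply/subsetP=> y; rewrite !inE.
rewrite /AT.
case: (leqP d.+1 #|T|) => hd.
  have E : nth 0 (iota 0 #|T|.+1) d.+1 = d.+1 by rewrite nth_iota.
  rewrite leqNgt; apply/negP => /(before_find 0); rewrite E H //.
apply: leq_trans (find_size _ _) _; rewrite size_iota; exact: hd.
Qed.

Lemma degenerate_of_sub (g : rel T) (d : nat) :
  (forall S : {set T}, S != set0 -> exists2 x, x \in S & #|[set y in S | g x y]| <= d) ->
  degenerate g d.
Proof.
move=> HS.
suff: forall n (S : {set T}), #|S| <= n -> exists r : T -> nat, injective r /\
   forall x, x \in S -> #|[set y in S | g x y & r x < r y]| <= d.
  case/(_ #|T| setT (max_card _)) => r [ri rd]; exists r; split=> // x.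
  apply: leq_trans (rd x (in_setT x)); apply: subset_leq_card; apply/subsetP=> y; rewrite !inE //.
elim=> [|n IH] S.
  rewrite leqn0 cards_eq0 => /eqP->; exists (fun x => nat_of_ord (enum_rank x)); split; [by move=> a b /val_inj/enum_rank_inj | by move=> x; rewrite inE].
case: (eqVneq S set0) => [-> _|Sn0].
  exists (fun x => nat_of_ord (enum_rank x)); split; [by move=> a b /val_inj/enum_rank_inj | by move=> x; rewrite inE].
move=> Sn; case: (HS S Sn0) => x0 x0S dx0.
have : #|S :\ x0| <= n by rewrite (cardsD1 x0) x0S in Sn.
case/IH=> r' [r'i r'd].
exists (fun y => if y == x0 then 0 else (r' y).+1); split.
  move=> a b; case: eqP => [->|na]; case: eqP => [->|nb] //.
  by move=> [] /r'i.
move=> x xS; case: eqP => [->|nx].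
  apply: leq_trans dx0; apply: subset_leq_card; apply/subsetP=> y; rewrite !inE.
  by case/and3P=> -> ->.
apply: leq_trans (r'd x _); last by rewrite !inE xS andbT; apply/eqP.
apply: subset_leq_card; apply/subsetP=> y; rewrite !inE.
case: eqP => [_|ny]; first by rewrite ltn0 !andbF.
by case/and3P=> -> -> ; rewrite ltnS => ->; rewrite andbT; apply/eqP.
Qed.
End Gen.

Lemma ar1 D k l a b : a <= D -> b <= D -> 0 + (a.-1 + b.-1) <= maxn (2 * D - 2) (k + l).
Proof. lia. Qed.
Lemma ar2 D k l c : c <= k -> l + c <= maxn (2 * D - 2) (k + l).
Proof. lia. Qed.
Lemma ar3 D k l c : D <= k -> c <= D -> l + c <= maxn (2 * D - 2) (k + l).
Proof. lia. Qed.
Lemma ar4 D k l s a b : s <= 1 -> 0 < a -> a <= k -> b <= D -> k < D ->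
  s + (a.-1 + b.-1) <= maxn (2 * D - 2) (k + l).
Proof. lia. Qed.

Section Q.
Variables (V W : finType) (g : rel V) (h : rel W).
Hypotheses (g_sym : symmetric g) (g_irr : irreflexive g)
  (h_sym : symmetric h) (h_irr : irreflexive h).

Lemma edge_shape (e : edge_of g) : exists a b, g a b /\ val e = [set a; b].
Proof.
have := valP e; rewrite inE => /existsP[a /existsP[b /andP[gab /eqP ->]]].
by exists a, b.
Qed.

Lemma edge_at (e : edge_of g) z : z \in val e -> exists y, g z y /\ val e = [set z; y].
Proof.
case: (edge_shape e) => a [b [gab ->]]; rewrite !inE => /orP[]/eqP->.
  by exists b.
by exists a; rewrite g_sym // setUC.
Qed.

Lemma card_edges_at x (P : pred (edge_of g)) (Q : pred V) :
  (forall e, P e -> x \in val e -> forall y, y != x -> y \in val e -> Q y) ->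
  #|[set e | P e & x \in val e]| <= #|[set y | g x y & Q y]|.
Proof.
move=> HPQ.
case: (set_0Vmem [set e | P e & x \in val e]) => [->|[e0 _]]; first by rewrite cards0.
pose f y := insubd e0 [set x; y].
apply: leq_trans (leq_imset_card f _).
apply: subset_leq_card; apply/subsetP=> e; rewrite inE => /andP[Pe xe].
case: (edge_at xe) => y [gxy ey].
have yx : y != x by apply: contraTneq gxy => ->; rewrite g_irr.
have ye : y \in val e by rewrite ey !inE eqxx orbT.
apply/imsetP; exists y; first by rewrite inE gxy (HPQ e).
apply: val_inj; rewrite /f insubdK // -ey; exact: valP.
Qed.

Lemma card_edges_at_max x (P : pred (edge_of g)) :
  #|[set e | P e & x \in val e]| <= maxdeg g.
Proof.
apply: leq_trans (card_edges_at (Q := predT) _) _ => //.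
apply: leq_trans (leq_bigmax_cond (F := fun x => #|[set y | g x y]|) x isT).
by apply: subset_leq_card; apply/subsetP=> y; rewrite !inE andbT.
Qed.

Definition nbS (S : {set (V + edge_of g) * W}) u := [set v in S | @Qprod V W g h u v].

Lemma nb_vertex S x w :
  #|nbS S (inl x, w)| <= #|[set w' | h w w' & (inl x, w') \in S]|
                        + #|[set e | (inr e, w) \in S & x \in val e]|.
Proof.
apply: leq_trans (leq_trans _ (leq_card_setU
   ((fun w' => (inl x, w')) @: [set w' | h w w' & (inl x, w') \in S])
   ((fun e => (inr e, w)) @: [set e | (inr e, w) \in S & x \in val e]))) _; last first.
  by apply: leq_add; apply: leq_imset_card.
apply: subset_leq_card; apply/subsetP=> -[a w'].
rewrite !inE /Qprod /=; case: a => [x'|e] /andP[inS]; case/orP => /andP[].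
- move=> /eqP[->] hww.
  by apply/orP; left; apply/imsetP; exists w' => //; rewrite inE hww inS.
- by move=> _ [] .
- by case/eqP.
move=> /eqP ew xe; subst w'.
by apply/orP; right; apply/imsetP; exists e => //; rewrite inE inS.
Qed.

Lemma nb_edge (S : {set (V + edge_of g) * W}) (e : edge_of g) w a b : (inr e, w) \in S -> val e = [set a; b] ->
  #|nbS S (inr e, w)| <= #|[set x | x \in val e & (inl x, w) \in S]|
    + (#|[set e' | (inr e', w) \in S & a \in val e']|.-1
       + #|[set e' | (inr e', w) \in S & b \in val e']|.-1).
Proof.
move=> eS ev.
set Ea := [set e' | (inr e', w) \in S & a \in val e']; set Eb := [set e' | (inr e', w) \in S & b \in val e'].
have eEa : e \in Ea by rewrite inE eS ev !inE eqxx.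
have eEb : e \in Eb by rewrite inE eS ev !inE eqxx orbT.
rewrite (cardsD1 e Ea) (cardsD1 e Eb) eEa eEb /=.
apply: leq_trans (leq_trans _ (leq_card_setU
   ((fun x => (inl x, w)) @: [set x | x \in val e & (inl x, w) \in S])
   ((fun e => (inr e, w)) @: ((Ea :\ e) :|: (Eb :\ e))))) _; last first.
  apply: leq_add; first exact: leq_imset_card.
  apply: leq_trans (leq_imset_card _ _) _; exact: leq_card_setU.
apply: subset_leq_card; apply/subsetP=> -[c w'].
rewrite !inE /Qprod /=; case: c => [x'|e'] /andP[inS]; case/orP => /andP[].
- by move=> _ [].
- move=> /eqP ew xe; subst w'.
  by apply/orP; left; apply/imsetP; exists x' => //; rewrite inE xe.
- by move=> _ [].
move=> /eqP ew /andP[ne' /set0Pn[c]]; subst w'.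
rewrite inE ev !inE => /andP[/orP[]/eqP-> ce'];
  apply/orP; right; apply/imsetP; exists e' => //; rewrite !inE eq_sym ne' inS ce' ?orbT //.
Qed.


Lemma sub_prop (k l : nat) (rG : V -> nat) (rH : W -> nat)
  (rGi : injective rG) (rGd : forall x, #|[set y | g x y & rG x < rG y]| <= k)
  (rHi : injective rH) (rHd : forall x, #|[set y | h x y & rH x < rH y]| <= l)
  (S : {set (V + edge_of g) * W}) : S != set0 ->
  exists2 u, u \in S & #|nbS S u| <= maxn (2 * maxdeg g - 2) (k + l).
Proof.
move=> Sn0.
set D := maxdeg g.
have adjb : forall e w a b, (inr e, w) \in S -> val e = [set a; b] ->
    #|[set e' | (inr e', w) \in S & a \in val e']| <= D /\
    #|[set e' | (inr e', w) \in S & b \in val e']| <= D.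
  by move=> *; split; apply: card_edges_at_max.
set X := [set u in S | is_vertex u.1].
case: (set_0Vmem X) => [X0|[u0 u0X]].
  case/set0Pn: Sn0 => -[[x|e] w] uS.
    by move/setP: X0 => /(_ (inl x, w)); rewrite !inE uS.
  exists (inr e, w) => //.
  case: (edge_shape e) => a [b [gab ev]].
  apply: leq_trans (nb_edge uS ev) _.
  have -> : #|[set x | x \in val e & (inl x, w) \in S]| = 0.
    apply/eqP; rewrite cards_eq0; apply/eqP/setP=> x; rewrite !inE.
    by move/setP: X0 => /(_ (inl x, w)); rewrite !inE /= andbT => ->; rewrite andbF.
  case: (adjb _ _ _ _ uS ev) => h1 h2; exact: ar1.
case: (@arg_minnP _ u0 (fun u => u \in X) (fun u => rH u.2) u0X) => ustar.
rewrite inE => /andP[usS]; case: ustar usS => -[xs|e] w0 //= xsS _ minw.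
set X0 := [set x | (inl x, w0) \in S].
have Hvert : forall x, x \in X0 ->
    #|nbS S (inl x, w0)| <= l + #|[set e | (inr e, w0) \in S & x \in val e]|.
  move=> x xX0; apply: leq_trans (nb_vertex S x w0) _; rewrite leq_add2r.
  apply: leq_trans (rHd w0); apply: subset_leq_card; apply/subsetP=> w'.
  rewrite !inE => /andP[hw' xw'S]; rewrite hw' /=.
  have := minw (inl x, w'); rewrite inE xw'S /= => /(_ isT) le.
  rewrite ltn_neqAle le andbT; apply/eqP=> /rHi eqw; subst w'.
  by rewrite h_irr in hw'.
set V0 := [set x | (x \in X0) || [exists e, ((inr e, w0) \in S) && (x \in val e)]].
have xsV0 : xs \in V0 by rewrite !inE xsS.
case: (@arg_minnP _ xs (fun x => x \in V0) rG xsV0) => z zV0 minz.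
have Ez : #|[set e | (inr e, w0) \in S & z \in val e]| <= k.
  apply: leq_trans (rGd z).
  apply: card_edges_at => e eS ze y yz ye.
  have yV0 : y \in V0 by rewrite !inE; apply/orP; right; apply/existsP; exists e; rewrite eS.
  rewrite ltn_neqAle minz // andbT; apply/eqP=> /rGi eq; by rewrite eq eqxx in yz.
case zX0 : (z \in X0).
  exists (inl z, w0); first by move: zX0; rewrite inE.
  apply: leq_trans (Hvert _ zX0) _; exact: ar2.
move: zV0; rewrite inE zX0 /= => /existsP[e /andP[eS ze]].
case: (edge_at ze) => y [gzy ev].
have ee : e \in [set e | (inr e, w0) \in S & z \in val e] by rewrite inE eS.
have Ez1 : 0 < #|[set e | (inr e, w0) \in S & z \in val e]| by apply/card_gt0P; exists e.
case: (adjb _ _ _ _ eS ev) => hz hy.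
case yX0 : (y \in X0).
  case: (leqP D k) => Dk.
    exists (inl y, w0); first by move: yX0; rewrite inE.
    apply: leq_trans (Hvert _ yX0) _.
    exact: ar3 Dk (card_edges_at_max y (fun e => (inr e, w0) \in S)).
  exists (inr e, w0) => //.
  apply: leq_trans (nb_edge eS ev) _.
  have : #|[set x | x \in val e & (inl x, w0) \in S]| <= 1.
    rewrite -(cards1 y); apply: subset_leq_card; apply/subsetP=> x.
    rewrite !inE ev !inE => /andP[/orP[]/eqP-> xS] //.
    by move: zX0; rewrite inE xS.
  move=> s1; exact: ar4.
exists (inr e, w0) => //.
apply: leq_trans (nb_edge eS ev) _.
have -> : #|[set x | x \in val e & (inl x, w0) \in S]| = 0.
  apply/eqP; rewrite cards_eq0; apply/eqP/setP=> x; rewrite !inE ev !inE.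
  apply/negbTE; apply/negP => /andP[/orP[]/eqP-> xS].
    by move: zX0; rewrite inE xS.
  by move: yX0; rewrite inE xS.
exact: ar1.
Qed.

End Q.
Section SQ.
Variables (V W : finType) (g : rel V) (h : rel W).
Hypotheses (h_sym : symmetric h) (h_irr : irreflexive h).
Lemma Qsym : symmetric (@Qprod V W g h).
Proof.
move=> [a w] [b w']; rewrite /Qprod /= h_sym (eq_sym w).
case: a b => [x|e] [y|e'] /=; rewrite ?(eq_sym (inl x)) ?(eq_sym (inr e)) //.
by rewrite (eq_sym e) setIC.
Qed.
Lemma Qirr : irreflexive (@Qprod V W g h).
Proof. by move=> [[x|e] w]; rewrite /Qprod /= ?(h_irr w) !eqxx ?andbF. Qed.
End SQ.

Theorem corollary3p8 (V W : finType) (g : rel V) (h : rel W)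
  (g_sym : symmetric g) (g_irr : irreflexive g)
  (h_sym : symmetric h) (h_irr : irreflexive h)
  (k l : nat) (Gdeg : degenerate g k) (Hdeg : degenerate h l) :
  AT (@Qprod V W g h) <= maxn (2 * maxdeg g - 2) (k + l) + 1.
Proof.
rewrite addn1; apply: AT_of_degenerate.
- exact: Qsym.
- exact: Qirr.
case: Gdeg => rG [rGi rGd]; case: Hdeg => rH [rHi rHd].
apply: degenerate_of_sub => S Sn0.
exact: (sub_prop g_sym g_irr h_irr rGi rGd rHi rHd Sn0).
Qed.
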